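(* Let $g=g(\lambda,\alpha,\delta)$ be a constraint. Then $T\cap\mathfrak{M}\cap\partial\bar{\mathcal{U}}_g$ is the union of two $2$-dimensional linear subspaces of $\mathbb{R}^5$.
   Context: Fix coordinates in $\mathbb{R}^3$ so that the line $\ell_0$ is the $z$-axis. A constraint is an (oriented) line meeting $\ell_0$ in exactly one point. For $\lambda,\alpha,\delta\in\mathbb{R}$, $g(\lambda,\alpha,\delta)$ denotes the constraint through the points $(0,0,\lambda)$ and $(\cos\alpha,\sin\alpha,\lambda+\delta)$ (every constraint is of this form). Its normal is $\eta_g=\big((1-\lambda)\sin\alpha,\,-(1-\lambda)\cos\alpha,\,\lambda\sin\alpha,\,-\lambda\cos\alpha\big)\in\mathbb{R}^4$. Define the closed halfspace $\bar{\mathcal{U}}_g=\{(u_1,\dots,u_5)\in\mathbb{R}^5\mid \delta u_5+\eta_g\cdot(u_1,u_2,u_3,u_4)\le0\}$, with boundary hyperplane $\partial\bar{\mathcal{U}}_g$. Let $\mathfrak{M}=\{u\in\mathbb{R}^5\mid u_5=u_2u_3-u_1u_4\}$ and $T=\{u\in\mathbb{R}^5\mid u_5=0\}$. *)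

(* Defs.v *)
From HB Require Import structures.
From mathcomp Require Import all_boot all_order all_algebra.
From mathcomp Require Import all_classical all_reals all_analysis.
Set Implicit Arguments. Unset Strict Implicit. Unset Printing Implicit Defensive.
Import Order.TTheory GRing.Theory Num.Theory.
Local Open Scope ring_scope.

Section Defs.
Variable R : realType.

(* The k-th coordinate (1-indexed, k = 1..5) of a point u of R^5 = 'rV[R]_5. *)
Definition crd (u : 'rV[R]_5) (k : nat) : R := u ord0 (inord k.-1).

Definition eta_g (lam al : R) : 'rV[R]_4 :=
  \row_(i < 4) [:: (1 - lam) * sin al; - ((1 - lam) * cos al);
                   lam * sin al; - (lam * cos al)]`_i.

(* boundary hyperplane of the closed halfspace bar U_g:
   del*u5 + eta_g . (u1,u2,u3,u4) = 0 *)
Definition bdU (lam al del : R) (u : 'rV[R]_5) : Prop :=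
  del * crd u 5 + \sum_(i < 4) eta_g lam al ord0 i * crd u i.+1 = 0.

Definition inM (u : 'rV[R]_5) : Prop :=
  crd u 5 = crd u 2 * crd u 3 - crd u 1 * crd u 4.

Definition inT (u : 'rV[R]_5) : Prop := crd u 5 = 0.
End Defs.

(* Main.v *)
Require Import Defs.
From HB Require Import structures.
From mathcomp Require Import all_boot all_order all_algebra.
From mathcomp Require Import all_classical all_reals all_analysis.
From mathcomp Require Import ring lra.
Import Order.TTheory GRing.Theory Num.Theory.
Local Open Scope ring_scope.

Lemma bdU_E (R : realType) lam al del (u : 'rV[R]_5) :
  bdU lam al del u <-> del * crd u 5 + ((1 - lam) * (sin al * crd u 1 - cos al * crd u 2)
     + lam * (sin al * crd u 3 - cos al * crd u 4)) = 0.
Proof.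
rewrite /bdU !big_ord_recl big_ord0 /eta_g !mxE /=.
have -> : (bump 0 0).+1 = 2%N by [].
have -> : (bump 0 (bump 0 0)).+1 = 3%N by [].
have -> : (bump 0 (bump 0 (bump 0 0))).+1 = 4%N by [].
set x := (X in X = 0 <-> _); set y := (X in _ <-> X = 0).
by have -> : x = y by rewrite /x /y; ring.
Qed.

Definition mk5 {R : realType} (a b c d e : R) : 'rV[R]_5 :=
  \row_(i < 5) [:: a; b; c; d; e]`_i.

Lemma crd_mk5 (R : realType) (a b c d e : R) :
  [/\ crd (mk5 a b c d e) 1 = a, crd (mk5 a b c d e) 2 = b, crd (mk5 a b c d e) 3 = c,
      crd (mk5 a b c d e) 4 = d & crd (mk5 a b c d e) 5 = e].
Proof. by rewrite /crd /mk5 !mxE /= !inordK. Qed.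

Lemma crdD (R : realType) (u v : 'rV[R]_5) k : crd (u + v) k = crd u k + crd v k.
Proof. by rewrite /crd mxE. Qed.
Lemma crdZ (R : realType) x (u : 'rV[R]_5) k : crd (x *: u) k = x * crd u k.
Proof. by rewrite /crd mxE. Qed.

Lemma row5P (R : realType) (u v : 'rV[R]_5) :
  crd u 1 = crd v 1 -> crd u 2 = crd v 2 -> crd u 3 = crd v 3 ->
  crd u 4 = crd v 4 -> crd u 5 = crd v 5 -> u = v.
Proof.
move=> h1 h2 h3 h4 h5; apply/rowP => i.
rewrite (_ : i = inord (i.+1).-1); last by rewrite /= inord_val.
case: i => [[|[|[|[|[|n]]]]] Hi] //=; rewrite -/(crd u _) -/(crd v _) //.
Qed.

Lemma mem_span2 (R : realType) (a b u : 'rV[R]_5) :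
  u \in <<[:: a; b]>>%VS <-> exists x y, u = x *: a + y *: b.
Proof.
rewrite span_cons span_seq1; split.
  move=> /memv_addP [y /vlineP [k ->] [z /vlineP [l ->] ->]]; by exists k, l.
move=> [x [y ->]]; apply: memv_add; apply: memvZ; apply: memv_line.
Qed.

Lemma dim_span2 (R : realType) (a b : 'rV[R]_5) :
  b != 0 -> (forall k, a <> k *: b) -> \dim <<[:: a; b]>>%VS = 2%N.
Proof.
move=> hb ha; apply/eqP.
have -> : (\dim <<[:: a; b]>>%VS == 2%N) = free [:: a; b] by [].
rewrite free_cons seq1_free hb andbT span_seq1.
by apply/vlineP => [[k hk]]; apply: (ha k).
Qed.

Lemma crd_mk5n (R : realType) (a b c d e : R) k : (0 < k <= 5)%N ->
  crd (mk5 a b c d e) k = [:: a; b; c; d; e]`_(k.-1).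
Proof. by move=> /andP [h1 h2]; rewrite /crd /mk5 mxE inordK //; case: k h1 h2. Qed.

Lemma crd0 (R : realType) k : crd (0 : 'rV[R]_5) k = 0.
Proof. by rewrite /crd mxE. Qed.

Theorem lemma9 (R : realType) (lam al del : R) :
  exists V W : {vspace 'rV[R]_5},
    [/\ (\dim V = 2)%N, (\dim W = 2)%N, V != W &
      forall u : 'rV[R]_5,
        (inT u /\ inM u /\ bdU lam al del u) <-> (u \in V \/ u \in W)].
Proof.
set c := cos al; set s := sin al.
have hsc : s ^+ 2 + c ^+ 2 = 1 by rewrite /s /c sin2cos2; ring.
set a1 := mk5 c s 0 0 0; set b1 := mk5 0 0 c s 0.
set a2 := mk5 lam 0 (lam - 1) 0 0; set b2 := mk5 0 lam 0 (lam - 1) 0.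
exists <<[:: a1; b1]>>%VS, <<[:: a2; b2]>>%VS; split.
- apply: dim_span2.
    apply/eqP => /[dup] /(congr1 (fun v => crd v 3)) + /(congr1 (fun v => crd v 4)).
    rewrite !crd_mk5n // !crd0 /= => h3 h4.
    nra.
  move=> k /[dup] /(congr1 (fun v => crd v 1)) + /(congr1 (fun v => crd v 2)).
  rewrite !crdZ !crd_mk5n //= mulr0 => h3 h4.
  nra.
- apply: dim_span2.
    apply/eqP => /[dup] /(congr1 (fun v => crd v 2)) + /(congr1 (fun v => crd v 4)).
    rewrite !crd_mk5n // !crd0 /= => h3 h4.
    lra.
  move=> k /[dup] /(congr1 (fun v => crd v 1)) + /(congr1 (fun v => crd v 3)).
  rewrite !crdZ !crd_mk5n //= !mulr0 => h3 h4.
  lra.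
- apply/eqP => hVW.
  have : a1 + b1 \in <<[:: a2; b2]>>%VS.
    by rewrite -hVW; apply/mem_span2; exists 1, 1; rewrite !scale1r.
  move/mem_span2 => [x [y]].
  move=> /[dup] /(congr1 (fun v => crd v 1)) + /[dup] /(congr1 (fun v => crd v 2)) +
         /[dup] /(congr1 (fun v => crd v 3)) + /(congr1 (fun v => crd v 4)).
  rewrite !crdD !crdZ !crd_mk5n //= !mulr0 !addr0 !add0r => h1 h2 h3 h4.
  have hx : x = 0 by rewrite (_ : x = x * lam - x * (lam - 1)); [rewrite -h1 -h3 subrr | ring].
  have hy : y = 0 by rewrite (_ : y = y * lam - y * (lam - 1)); [rewrite -h2 -h4 subrr | ring].
  have hc : c = 0 by rewrite h1 hx mul0r.
  have hs : s = 0 by rewrite h2 hy mul0r.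
  nra.
move=> u; split.
- rewrite bdU_E /inT /inM => -[h5 [hM hB]].
  move: hM hB; rewrite h5 mulr0 add0r.
  set u1 := crd u 1; set u2 := crd u 2; set u3 := crd u 3; set u4 := crd u 4.
  move=> hM hB.
  set A := (1 - lam) * u1 + lam * u3; set B := (1 - lam) * u2 + lam * u4.
  have hAB : s * A - c * B = 0 by rewrite -[X in _ = X]hB /A /B /s /c; ring.
  have e1 : u1 * B - u2 * A = 0.
    have -> : u1 * B - u2 * A = - lam * (u2 * u3 - u1 * u4) by rewrite /A /B; ring.
    by rewrite -hM mulr0.
  have e2 : u3 * B - u4 * A = 0.
    have -> : u3 * B - u4 * A = (1 - lam) * (u2 * u3 - u1 * u4) by rewrite /A /B; ring.
    by rewrite -hM mulr0.
  have [/andP [/eqP hA /eqP hB0] | hne] := boolP ((A == 0) && (B == 0)).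
    right; apply/mem_span2; exists (u1 - u3), (u2 - u4).
    apply: row5P; rewrite !crdD !crdZ !crd_mk5n //= ?h5; rewrite -/u1 -/u2 -/u3 -/u4.
    + by move: hA; rewrite /A => hA; nra.
    + by move: hB0; rewrite /B => hB0; nra.
    + by move: hA; rewrite /A => hA; nra.
    + by move: hB0; rewrite /B => hB0; nra.
    + ring.
  have D1A : (s * u1 - c * u2) * A = 0.
    have -> : (s * u1 - c * u2) * A = (s * A - c * B) * u1 + (u1 * B - u2 * A) * c by ring.
    by rewrite hAB e1 !mul0r addr0.
  have D1B : (s * u1 - c * u2) * B = 0.
    have -> : (s * u1 - c * u2) * B = (s * A - c * B) * u2 + (u1 * B - u2 * A) * s by ring.
    by rewrite hAB e1 !mul0r addr0.
  have D2A : (s * u3 - c * u4) * A = 0.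
    have -> : (s * u3 - c * u4) * A = (s * A - c * B) * u3 + (u3 * B - u4 * A) * c by ring.
    by rewrite hAB e2 !mul0r addr0.
  have D2B : (s * u3 - c * u4) * B = 0.
    have -> : (s * u3 - c * u4) * B = (s * A - c * B) * u4 + (u3 * B - u4 * A) * s by ring.
    by rewrite hAB e2 !mul0r addr0.
  have [D1 D2] : s * u1 - c * u2 = 0 /\ s * u3 - c * u4 = 0.
    move: hne; rewrite negb_and => /orP [] hn.
      by move: D1A D2A => /eqP; rewrite mulf_eq0 (negbTE hn) orbF => /eqP -> /eqP;
         rewrite mulf_eq0 (negbTE hn) orbF => /eqP ->.
    by move: D1B D2B => /eqP; rewrite mulf_eq0 (negbTE hn) orbF => /eqP -> /eqP;
       rewrite mulf_eq0 (negbTE hn) orbF => /eqP ->.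
  left; apply/mem_span2; exists (c * u1 + s * u2), (c * u3 + s * u4).
  apply: row5P; rewrite !crdD !crdZ !crd_mk5n //= ?h5; rewrite -/u1 -/u2 -/u3 -/u4.
  + transitivity ((s^+2+c^+2)*u1 - s*(s*u1 - c*u2)); last by ring.
    by rewrite hsc D1 mulr0 subr0 mul1r.
  + transitivity ((s^+2+c^+2)*u2 + c*(s*u1 - c*u2)); last by ring.
    by rewrite hsc D1 mulr0 addr0 mul1r.
  + transitivity ((s^+2+c^+2)*u3 - s*(s*u3 - c*u4)); last by ring.
    by rewrite hsc D2 mulr0 subr0 mul1r.
  + transitivity ((s^+2+c^+2)*u4 + c*(s*u3 - c*u4)); last by ring.
    by rewrite hsc D2 mulr0 addr0 mul1r.
  + ring.
- rewrite bdU_E /inT /inM => -[] /mem_span2 [x [y ->]];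
    rewrite !crdD !crdZ !crd_mk5n //= /s /c; (split; first by ring); split; ring.
Qed.
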